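(* In every instance of the Balancing with Friendship game with $m=2$ machines: - every state minimizing the social cost is a strong Nash equilibrium; - every strong Nash equilibrium $\vec s$ satisfies $c(\vec s)\le\frac43c(\vec s^* )$.
   Context: An instance of the Balancing with Friendship (BwF) game consists of: - players $N=\{1,\dots,n\}$; - machines $M=\{1,\dots,m\}$; - a simple undirected graph $G=(N,E)$ (the friendship graph). A state is $\vec s\in M^n$, with $X_k(\vec s)=\{i:s_i=k\}$ and $x_k(\vec s)=|X_k(\vec s)|$. The cost of player $i$ with $s_i=k$ is $x_k(\vec s)$ plus the number of neighbours of $i$ in $G$ not on machine $k$. The social cost is $c(\vec s)=\sum_ic_i(\vec s)$, and $\vec s^*$ minimizes $c$. A state $\vec s$ is a strong Nash equilibrium if for every nonempty coalition $C\subseteq N$ and every joint deviation $\vec s_C'\in M^C$, some $i\in C$ has $c_i(\vec s)\le c_i(\vec s_C',\vec s_{-C})$. *)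

(* Defs.v *)
From mathcomp Require Import all_boot.
Set Implicit Arguments. Unset Strict Implicit. Unset Printing Implicit Defensive.

Definition simple_graph (n : nat) (e : rel 'I_n) : Prop :=
  symmetric e /\ irreflexive e.

Definition state (n m : nat) := {ffun 'I_n -> 'I_m}.

Definition load n m (s : state n m) (k : 'I_m) : nat := #|[set i | s i == k]|.

Definition pcost n m (e : rel 'I_n) (s : state n m) (i : 'I_n) : nat :=
  load s (s i) + #|[set j | e i j & s j != s i]|.

Definition scost n m (e : rel 'I_n) (s : state n m) : nat :=
  \sum_(i < n) pcost e s i.

Definition social_optimum n m (e : rel 'I_n) (s : state n m) : Prop :=
  forall s' : state n m, scost e s <= scost e s'.

Definition deviate n m (s : state n m) (C : {set 'I_n}) (s' : state n m)
  : state n m := [ffun i => if i \in C then s' i else s i].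

Definition strong_NE n m (e : rel 'I_n) (s : state n m) : Prop :=
  forall (C : {set 'I_n}) (s' : state n m), C != set0 ->
    exists2 i, i \in C & pcost e s i <= pcost e (deviate s C s') i.

(* Main.v *)
Require Import Defs.
From mathcomp Require Import all_boot zify.
Set Implicit Arguments. Unset Strict Implicit. Unset Printing Implicit Defensive.

Lemma cs n (P : pred 'I_n) : #|[set j | P j]| = \sum_(j < n) (P j : nat).
Proof. rewrite -sum1_card big_mkcond /=. apply: eq_bigr => j _. by rewrite inE; case: (P j). Qed.

Lemma I2_cases (a : 'I_2) : a = ord0 \/ a = ord_max.
Proof. case: a => [[|[|k]] Hk]; [left|right|]; try exact: val_inj. by []. Qed.

Definition Fc n (e : rel 'I_n) (s : state n 2) (i j : 'I_n) : nat := ~~ e i j && (s i != s j).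
Definition cd n (e : rel 'I_n) (s : state n 2) i := \sum_(j < n) Fc e s i j.
Definition Cut n (e : rel 'I_n) (s : state n 2) := \sum_(i < n) cd e s i.

Lemma pcost_cd n (e : rel 'I_n) s i : pcost e s i + cd e s i = n.
Proof.
rewrite /pcost /load /cd !cs -!big_split /=.
rewrite -[X in _ = X]card_ord -sum1_card.
apply: eq_bigr => j _. rewrite /Fc eq_sym.
by case: (s i == s j); case: (e i j).
Qed.

Lemma scost_Cut n (e : rel 'I_n) s : scost e s + Cut e s = n * n.
Proof.
rewrite /scost /Cut -big_split /=.
rewrite (eq_bigr (fun _ => n)); last by move=> i _; exact: pcost_cd.
by rewrite sum_nat_const card_ord.
Qed.

Lemma Fc_sym n (e : rel 'I_n) s i j : symmetric e -> Fc e s i j = Fc e s j i.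
Proof. by move=> He; rewrite /Fc He eq_sym. Qed.

Lemma flip_identity n (e : rel 'I_n) (s t : state n 2) (m : pred 'I_n) :
  symmetric e ->
  (forall i j, (t i != t j) = ((s i != s j) (+) (m i (+) m j))) ->
  Cut e t + 2 * \sum_(i | m i) cd e s i = Cut e s + 2 * \sum_(i | m i) cd e t i.
Proof.
move=> He Ht.
have split u : Cut e u = \sum_(i | m i) \sum_(j | m j) Fc e u i j
   + \sum_(i | m i) \sum_(j | ~~ m j) Fc e u i j
   + \sum_(i | ~~ m i) \sum_(j | m j) Fc e u i j
   + \sum_(i | ~~ m i) \sum_(j | ~~ m j) Fc e u i j.
  rewrite /Cut (bigID m) /= /cd.
  rewrite (eq_bigr (fun i => \sum_(j | m j) Fc e u i j + \sum_(j | ~~ m j) Fc e u i j));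
    last by move=> i _; rewrite (bigID m).
  rewrite [X in _ + X](eq_bigr (fun i => \sum_(j | m j) Fc e u i j + \sum_(j | ~~ m j) Fc e u i j));
    last by move=> i _; rewrite (bigID m).
  by rewrite !big_split /= !addnA.
have rowY u : \sum_(i | m i) cd e u i = \sum_(i | m i) \sum_(j | m j) Fc e u i j
   + \sum_(i | m i) \sum_(j | ~~ m j) Fc e u i j.
  rewrite -big_split /=; apply: eq_bigr => i _; by rewrite /cd (bigID m).
have symc u : \sum_(i | ~~ m i) \sum_(j | m j) Fc e u i j = \sum_(i | m i) \sum_(j | ~~ m j) Fc e u i j.
  rewrite exchange_big /=; apply: eq_bigr => i _; apply: eq_bigr => j _; exact: Fc_sym.
have eqYY : \sum_(i | m i) \sum_(j | m j) Fc e t i j = \sum_(i | m i) \sum_(j | m j) Fc e s i j.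
  apply: eq_bigr => i Hi; apply: eq_bigr => j Hj; rewrite /Fc Ht Hi Hj; by case: (s i != s j).
have eqNN : \sum_(i | ~~ m i) \sum_(j | ~~ m j) Fc e t i j = \sum_(i | ~~ m i) \sum_(j | ~~ m j) Fc e s i j.
  apply: eq_bigr => i Hi; apply: eq_bigr => j Hj; rewrite /Fc Ht (negbTE Hi) (negbTE Hj); by case: (s i != s j).
rewrite (split t) (split s) (rowY t) (rowY s) (symc t) (symc s) eqYY eqNN.
lia.
Qed.
Definition nflip (a : 'I_2) : 'I_2 := if a == ord0 then ord_max else ord0.
Definition flip n (s : state n 2) (Y : {set 'I_n}) : state n 2 :=
  [ffun i => if i \in Y then nflip (s i) else s i].

Lemma flip_rel n (s : state n 2) Y i j :
  (flip s Y i != flip s Y j) = (s i != s j) (+) ((i \in Y) (+) (j \in Y)).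
Proof.
rewrite !ffunE; case: (i \in Y); case: (j \in Y);
case: (I2_cases (s i)) => ->; case: (I2_cases (s j)) => ->; by [].
Qed.

Lemma rel_xor (a b a' b' : 'I_2) : (a' != b') = (a != b) (+) ((a' != a) (+) (b' != b)).
Proof.
by case: (I2_cases a) => ->; case: (I2_cases b) => ->;
case: (I2_cases a') => ->; case: (I2_cases b') => ->.
Qed.

Lemma opt_sne n (e : rel 'I_n) (s : state n 2) : symmetric e -> social_optimum e s -> strong_NE e s.
Proof.
move=> He Hopt C s' HC.
set t := deviate s C s'.
case: (boolP [exists i in C, pcost e s i <= pcost e t i]).
  by move/exists_inP => [i Hi H]; exists i.
rewrite negb_exists_in => /forall_inP Hall; exfalso.
pose m := fun i => (i \in C) && (s' i != s i).
have tm : forall i, (t i != s i) = m i.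
  by move=> i; rewrite /t /deviate ffunE /m; case: (i \in C) => //=; rewrite eqxx.
have Ht : forall i j, (t i != t j) = (s i != s j) (+) (m i (+) m j).
  by move=> i j; rewrite (rel_xor (s i) (s j)) !tm.
case: (boolP [exists i, m i]).
  move/existsP => [i0 Hi0].
  have Hid := flip_identity He Ht.
  have Hlt : forall i, m i -> cd e s i < cd e t i.
    move=> i /andP [HiC _]; have := Hall i HiC; rewrite -ltnNge => H.
    have := pcost_cd e s i; have := pcost_cd e t i; lia.
  have Hsum : (\sum_(i | m i) cd e s i) < \sum_(i | m i) cd e t i.
    rewrite (bigD1 i0) //= [X in _ < X](bigD1 i0) //=.
    have := Hlt i0 Hi0.
    have : \sum_(i | m i && (i != i0)) cd e s i <= \sum_(i | m i && (i != i0)) cd e t i.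
      by apply: leq_sum => i /andP [Hi _]; apply: ltnW; apply: Hlt.
    move=> H1 H2; rewrite -addSn; exact: leq_add.
  have := Hopt t; have := scost_Cut e s; have := scost_Cut e t. have : Cut e s < Cut e t by move: Hid Hsum; set X := \sum_(i | m i) cd e s i; set Y := \sum_(i | m i) cd e t i; lia.
  lia.
rewrite negb_exists => /forallP Hno.
have Hts : t = s.
  apply/ffunP => i; apply/eqP; rewrite -[_ == _]negbK tm; exact: Hno.
case/set0Pn: HC => i0 Hi0.
have := Hall i0 Hi0; by rewrite Hts leqnn.
Qed.

Definition Fp n (e : rel 'I_n) (s : state n 2) (i j : 'I_n) : nat :=
  [&& ~~ e i j, s i == s j & i != j].
Definition pY n (e : rel 'I_n) (s : state n 2) (Y : {set 'I_n}) :=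
  \sum_(i in Y) \sum_(j in Y) Fp e s i j.
Definition qY n (e : rel 'I_n) (s : state n 2) (Y : {set 'I_n}) :=
  \sum_(i in Y) \sum_(j in Y) Fc e s i j.

Lemma double_D1 n (f : 'I_n -> 'I_n -> nat) (Y : {set 'I_n}) y :
  (forall i j, f i j = f j i) -> y \in Y ->
  \sum_(i in Y) \sum_(j in Y) f i j =
  \sum_(i in Y :\ y) \sum_(j in Y :\ y) f i j + 2 * \sum_(j in Y :\ y) f y j + f y y.
Proof.
move=> Hf Hy.
rewrite (big_setD1 y Hy) /= (big_setD1 y Hy) /=.
have -> : \sum_(i in Y :\ y) \sum_(j in Y) f i j =
  \sum_(i in Y :\ y) (f i y + \sum_(j in Y :\ y) f i j).
  by apply: eq_bigr => i _; rewrite (big_setD1 y Hy).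
rewrite big_split /=.
have -> : \sum_(i in Y :\ y) f i y = \sum_(j in Y :\ y) f y j.
  by apply: eq_bigr => i _; rewrite Hf.
set S1 := \sum_(j in Y :\ y) f y j; set S2 := \sum_(i in Y :\ y) \sum_(j in Y :\ y) f i j; lia.

Qed.

Lemma Flemma n (e : rel 'I_n) (s : state n 2) :
  symmetric e -> strong_NE e s ->
  forall Y, Cut e (flip s Y) + pY e s Y <= Cut e s + qY e s Y.
Proof.
move=> He Hs Y.
move: {2}#|Y| (leqnn #|Y|) => k.
elim: k Y => [|k IH] Y HY;
  (case: (set_0Vmem Y) => [->|[y Hy]];
  [ have -> : flip s set0 = s by apply/ffunP => i; rewrite ffunE in_set0 |]).
- by rewrite /pY big_set0 addn0 leq_addr.
- by move: HY; rewrite (cardsD1 y) Hy.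
- by rewrite /pY big_set0 addn0 leq_addr.
set Y' := Y :\ y.
have HY' : #|Y'| <= k by move: HY; rewrite (cardsD1 y Y) Hy.
have IH' := IH Y' HY'.
have [z Hz Hcost] : exists2 z, z \in Y & pcost e s z <= pcost e (flip s Y) z.
  have HY0 : Y != set0 by apply/set0Pn; exists y.
  have := Hs Y (flip s Y) HY0.
  have -> : deviate s Y (flip s Y) = flip s Y.
    by apply/ffunP => i; rewrite !ffunE; case: (i \in Y).
  by [].
clear y Hy Y' HY' IH'.
set Y' := Y :\ z.
have HY' : #|Y'| <= k by move: HY; rewrite (cardsD1 z Y) Hz.
have IH' := IH Y' HY'.
have H : cd e (flip s Y) z <= cd e s z.
  have := pcost_cd e s z; have := pcost_cd e (flip s Y) z; lia.
have E1 := @flip_identity n e (flip s Y') (flip s Y) (fun i => i == z) He.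
rewrite !big_pred1_eq in E1.
have E1' : Cut e (flip s Y) + 2 * cd e (flip s Y') z = Cut e (flip s Y') + 2 * cd e (flip s Y) z.
  apply: E1 => i j.
  rewrite !flip_rel /Y' !in_setD1.
  case: (eqVneq i z) => [->|_]; case: (eqVneq j z) => [->|_]; rewrite ?Hz /=;
  by case: (s _ != s _); case: (_ \in Y); case: (_ \in Y).
clear E1.
pose A := \sum_(j | j \notin Y') Fc e s z j.
pose G := \sum_(j in Y') Fp e s z j.
pose F := \sum_(j in Y') Fc e s z j.
have E2 : cd e (flip s Y') z = G + A.
  rewrite /cd (bigID (fun j => j \in Y')) /=; congr (_ + _).
    apply: eq_bigr => j Hj; rewrite /Fc /Fp flip_rel Hj.
    have Hzn : z \notin Y' by rewrite /Y' !in_setD1 eqxx.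
    rewrite (negbTE Hzn) /=.
    have Hjz : j != z by move: Hj; rewrite /Y' in_setD1 => /andP [].
    rewrite (eq_sym z) Hjz andbT; by case: (s z == s j).
  apply: eq_bigr => j Hj; rewrite /Fc flip_rel (negbTE Hj).
  have Hzn : z \notin Y' by rewrite /Y' !in_setD1 eqxx.
  by rewrite (negbTE Hzn) /=; case: (s z != s j).
have E3 : cd e s z = F + A by rewrite /cd (bigID (fun j => j \in Y')).
have E4 : pY e s Y = pY e s Y' + 2 * G + Fp e s z z.
  rewrite /pY /G /Y'; apply: double_D1 => //.
  by move=> i j; rewrite /Fp He eq_sym [j == i]eq_sym.
have E5 : qY e s Y = qY e s Y' + 2 * F + Fc e s z z.
  rewrite /qY /F /Y'; apply: double_D1 => //.
  by move=> i j; apply: Fc_sym.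
have Z1 : Fp e s z z = 0 by rewrite /Fp !eqxx; case: (e z z).
have Z2 : Fc e s z z = 0 by rewrite /Fc eqxx; case: (e z z).
lia.
Qed.

Lemma sum_cond_const n (P : pred 'I_n) c :
  \sum_(i | P i) c = (\sum_(i < n) (P i : nat)) * c.
Proof.
rewrite big_mkcond big_distrl /=; apply: eq_bigr => i _; by case: (P i); rewrite ?mul1n ?mul0n.
Qed.

Lemma amgm (a b : nat) : 4 * (a * b) <= (a + b) * (a + b).
Proof. have : (a - b) * (a - b) + 4 * (a * b) = (a+b)*(a+b) \/ (b - a) * (b - a) + 4 * (a * b) = (a+b)*(a+b) by nia. lia. Qed.

Lemma Cut_half n (e : rel 'I_n) (u : state n 2) : 2 * Cut e u <= n * n.
Proof.
have H1 : Cut e u <= \sum_(i < n) \sum_(j < n) (u i != u j : nat).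
  apply: leq_sum => i _; apply: leq_sum => j _; rewrite /Fc.
  by case: (e i j); case: (u i != u j).
pose x := \sum_(j < n) (u j == ord0 : nat).
pose y := \sum_(j < n) (u j != ord0 : nat).
have Hxy : x + y = n.
  rewrite /x /y -big_split /= -[X in _ = X]card_ord -sum1_card.
  by apply: eq_bigr => j _; case: (u j == ord0).
have H2 : \sum_(i < n) \sum_(j < n) (u i != u j : nat) = x * y + y * x.
  rewrite (bigID (fun i => u i == ord0)) /=.
  rewrite (eq_bigr (fun _ => y)); last first.
    move=> i /eqP ->; apply: eq_bigr => j _; by rewrite eq_sym.
  rewrite [X in _ + X](eq_bigr (fun _ => x)); last first.
    move=> i Hi; apply: eq_bigr => j _.
    by move: Hi; case: (I2_cases (u i)) => ->; case: (I2_cases (u j)) => ->.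
  by rewrite !sum_cond_const.
rewrite H2 in H1.
have := amgm x y.
rewrite Hxy. lia.
Qed.

Lemma qY_le n (e : rel 'I_n) (s : state n 2) Y : qY e s Y <= \sum_(i in Y) cd e s i.
Proof.
apply: leq_sum => i _; rewrite /cd [X in _ <= X](bigID (fun j => j \in Y)) /=; exact: leq_addr.
Qed.

Lemma Cut_eq n (e : rel 'I_n) (u v : state n 2) :
  (forall i j, (u i != u j) = (v i != v j)) -> Cut e u = Cut e v.
Proof.
by move=> H; apply: eq_bigr => i _; apply: eq_bigr => j _; rewrite /Fc H.
Qed.

Theorem theorem16 (n : nat) (e : rel 'I_n) :
  simple_graph e ->
  (forall s : state n 2, social_optimum e s -> strong_NE e s) /\
  (forall s sopt : state n 2, strong_NE e s -> social_optimum e sopt ->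
     3 * scost e s <= 4 * scost e sopt).
Proof.
move=> [He Hirr]; split.
  by move=> s; apply: opt_sne.
move=> s sopt Hs Hopt.
set D := [set i | sopt i != s i].
have F1 := Flemma He Hs D.
have F2 := Flemma He Hs (~: D).
have C1 : Cut e (flip s D) = Cut e sopt.
  apply: Cut_eq => i j; rewrite flip_rel (rel_xor (s i) (s j) (sopt i) (sopt j)) !inE //.
have C2 : Cut e (flip s (~: D)) = Cut e sopt.
  apply: Cut_eq => i j; rewrite flip_rel (rel_xor (s i) (s j) (sopt i) (sopt j)) !inE.
  by case: (sopt i != s i); case: (sopt j != s j).
have Q1 := qY_le e s D.
have Q2 := qY_le e s (~: D).
have Q : \sum_(i in D) cd e s i + \sum_(i in ~: D) cd e s i = Cut e s.
  rewrite /Cut [RHS](bigID (fun i => i \in D)) /=; congr (_ + _).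
  by apply: eq_bigl => i; rewrite inE.
have H1 := scost_Cut e s. have H2 := scost_Cut e sopt.
have H3 := Cut_half e sopt.
rewrite C1 in F1; rewrite C2 in F2.
move: F1 F2 Q1 Q2 Q H1 H2 H3.
set N := n * n.
set A1 := \sum_(i in D) cd e s i.
set A2 := \sum_(i in ~: D) cd e s i.
lia.
Qed.
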